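(* Let $\widetilde C$ be an $\mathcal S$-complex over $R$. Then the negative suspension $\Sigma^{-1}\widetilde C$ is $\mathcal S$-chain homotopy equivalent to $\widetilde C\otimes\widetilde{\mathcal O}(-1)$.
   Context: Let $R$ be a commutative ring. Graded modules are $\mathbb Z$-graded; $V[i]_j=V_{i+j}$; differentials have degree $-1$; $\epsilon$ is the sign map ($(-1)^i$ on degree $i$). An $\mathcal S$-complex over $R$ is a chain complex $(\widetilde C,\widetilde d)$ of finitely generated free graded $R$-modules with a graded decomposition $\widetilde C=C\oplus C[-1]\oplus\mathsf R$ in which $\widetilde d=\begin{pmatrix} d&0&0\\ v&-d&\delta_2\\ \delta_1&0&r\end{pmatrix}$. Let $\chi$ be the degree $1$ map sending $C$ identically onto $C[-1]$ and zero on $C[-1]\oplus\mathsf R$. A morphism is a degree $0$ chain map $\widetilde\lambda$ with $\chi'\widetilde\lambda=\widetilde\lambda\chi$; an $\mathcal S$-chain homotopy between morphisms is a degree $1$ map $\widetilde K$ with $\chi'\widetilde K+\widetilde K\chi=0$ and $\widetilde d'\widetilde K+\widetilde K\widetilde d$ equal to their difference; an $\mathcal S$-chain homotopy equivalence is a pair of morphisms whose composites are $\mathcal S$-chain homotopic to identities. The tensor product $\widetilde C\otimes\widetilde C'$ is the tensor product chain complex (differential $\widetilde d\otimes1+\epsilon\otimes\widetilde d'$) with $\chi^\otimes=\chi\otimes1+\epsilon\otimes\chi'$, an $\mathcal S$-complex with reducible summand $\mathsf R\otimes\mathsf R'$. The negative suspension $\Sigma^{-1}\widetilde C$ is the $\mathcal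 S$-complex $C_{\Sigma^{-1}}\oplus C_{\Sigma^{-1}}[-1]\oplus\mathsf R$ with $C_{\Sigma^{-1}}=C[2]\oplus\mathsf R[2]$ and, with respect to the ordered summands $C[2],\mathsf R[2],C[1],\mathsf R[1],\mathsf R$, differential $\widetilde d_{\Sigma^{-1}}=\begin{pmatrix} d&0&0&0&0\\ \delta_1&r&0&0&0\\ v&\delta_2&-d&0&0\\ 0&0&-\delta_1&-r&1\\ \delta_1v&\delta_1\delta_2&0&0&r\end{pmatrix}$ (the entry $1$ is the identity $\mathsf R\to\mathsf R[1]$). $\widetilde{\mathcal O}(-1)$ is the $\mathcal S$-complex with $C=R$ in degree $-2$, $\mathsf R=R$ in degree $0$, $d=v=\delta_1=r=0$ and $\delta_2:\mathsf R\to C$ the identity of $R$. *)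

(* Defs.v *)
From HB Require Import structures.
From mathcomp Require Import all_boot all_order all_algebra.
Set Implicit Arguments. Unset Strict Implicit. Unset Printing Implicit Defensive.
Import GRing.Theory.
Local Open Scope ring_scope.

(* A finitely generated free graded R-module, given by a finite homogeneous
   basis [gen] together with the degree of each basis element. *)
Record gmod := GMod { gen : finType; deg : gen -> int }.

(* Shift: V[i]_j = V_{i+j}; a generator of degree k of V has degree k - i in V[i]. *)
Definition shift (V : gmod) (i : int) : gmod := @GMod (gen V) (fun g => deg g - i).

Definition dsum (V W : gmod) : gmod :=
  @GMod (gen V + gen W)%type
    (fun x => match x with inl a => deg a | inr b => deg b end).

Definition tmod (V W : gmod) : gmod :=
  @GMod (gen V * gen W)%type (fun p => deg p.1 + deg p.2).

Section Defs.
Variable R : comPzRingType.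

(* An R-linear map V -> W, as its matrix in the given bases:
   [f i j] is the coefficient of the basis element i of W in f(j). *)
Definition gmap (V W : gmod) := gen W -> gen V -> R.

Definition has_degree (V W : gmod) (k : int) (f : gmap V W) :=
  forall i j, f i j != 0 -> deg i = deg j + k.

Definition mcomp (U V W : gmod) (f : gmap V W) (g : gmap U V) : gmap U W :=
  fun i k => \sum_(j : gen V) f i j * g j k.
Definition madd (V W : gmod) (f g : gmap V W) : gmap V W := fun i j => f i j + g i j.
Definition msub (V W : gmod) (f g : gmap V W) : gmap V W := fun i j => f i j - g i j.
Definition mzero (V W : gmod) : gmap V W := fun _ _ => 0.
Definition mid (V : gmod) : gmap V V := fun i j => (i == j)%:R.
Definition meq (V W : gmod) (f g : gmap V W) := forall i j, f i j = g i j.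

Definition sgnz (k : int) : R := if odd (absz k) then -1 else 1.
Definition eps (V : gmod) : gmap V V := fun i j => (i == j)%:R * sgnz (deg j).

(* Tensor product of maps (no extra signs; Koszul signs are explicit via eps). *)
Definition tmap (V V' W W' : gmod) (f : gmap V W) (g : gmap V' W')
  : gmap (tmod V V') (tmod W W') := fun i j => f i.1 j.1 * g i.2 j.2.

(* A graded free module with a (degree -1) differential and a (degree 1) map chi:
   the only data used by morphisms and homotopies of S-complexes. *)
Record dchi := DChi { dc_mod : gmod; dc_d : gmap dc_mod dc_mod; dc_chi : gmap dc_mod dc_mod }.
Arguments dc_d : clear implicits.
Arguments dc_chi : clear implicits.

Definition is_Smorph (A B : dchi) (l : gmap (dc_mod A) (dc_mod B)) :=
  [/\ has_degree 0 l,
      meq (mcomp (dc_d B) l) (mcomp l (dc_d A)) &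
      meq (mcomp (dc_chi B) l) (mcomp l (dc_chi A))].

Definition is_Shtpy (A B : dchi) (l l' K : gmap (dc_mod A) (dc_mod B)) :=
  [/\ has_degree 1 K,
      meq (madd (mcomp (dc_chi B) K) (mcomp K (dc_chi A))) (@mzero _ _) &
      meq (madd (mcomp (dc_d B) K) (mcomp K (dc_d A))) (msub l l')].

Definition S_htpy_equiv (A B : dchi) :=
  exists (f : gmap (dc_mod A) (dc_mod B)) (g : gmap (dc_mod B) (dc_mod A)),
    [/\ is_Smorph f, is_Smorph g,
        (exists K, is_Shtpy (mcomp g f) (@mid (dc_mod A)) K) &
        (exists K, is_Shtpy (mcomp f g) (@mid (dc_mod B)) K)].

Definition dtensor (A B : dchi) : dchi :=
  @DChi (tmod (dc_mod A) (dc_mod B))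
    (madd (tmap (dc_d A) (@mid (dc_mod B))) (tmap (@eps (dc_mod A)) (dc_d B)))
    (madd (tmap (dc_chi A) (@mid (dc_mod B))) (tmap (@eps (dc_mod A)) (dc_chi B))).

(* Data of an S-complex Ct = C + C[-1] + Rs with differential
   [[d,0,0],[v,-d,delta2],[delta1,0,r]]. *)
Record Sdata := SData {
  S_C : gmod; S_R : gmod;
  S_d : gmap S_C S_C;
  S_v : gmap S_C S_C;            (* C -> C[-1] *)
  S_delta1 : gmap S_C S_R;
  S_delta2 : gmap S_R S_C;       (* Rs -> C[-1] *)
  S_r : gmap S_R S_R }.
Arguments S_d : clear implicits.
Arguments S_v : clear implicits.
Arguments S_delta1 : clear implicits.
Arguments S_delta2 : clear implicits.
Arguments S_r : clear implicits.

Definition Stot (S : Sdata) : gmod := dsum (dsum (S_C S) (shift (S_C S) (-1))) (S_R S).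

Definition Sdiff (S : Sdata) : gmap (Stot S) (Stot S) :=
  fun (i j : (gen (S_C S) + gen (S_C S)) + gen (S_R S)) =>
  match i, j with
  | inl (inl a), inl (inl b) => S_d S a b
  | inl (inr a), inl (inl b) => S_v S a b
  | inl (inr a), inl (inr b) => - S_d S a b
  | inl (inr a), inr b => S_delta2 S a b
  | inr a, inl (inl b) => S_delta1 S a b
  | inr a, inr b => S_r S a b
  | _, _ => 0
  end.

Definition Schi (S : Sdata) : gmap (Stot S) (Stot S) :=
  fun (i j : (gen (S_C S) + gen (S_C S)) + gen (S_R S)) =>
  match i, j with
  | inl (inr a), inl (inl b) => (a == b)%:R
  | _, _ => 0
  end.

Arguments Sdiff : clear implicits.
Arguments Schi : clear implicits.

Definition Sdchi (S : Sdata) : dchi := @DChi (Stot S) (Sdiff S) (Schi S).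

Definition is_Scomplex (S : Sdata) :=
  has_degree (-1) (Sdiff S) /\ meq (mcomp (Sdiff S) (Sdiff S)) (@mzero _ _).

(* Negative suspension: C_Sigma = C[2] + Rs[2], reducible part Rs; ordered
   summands C[2], Rs[2], C[1], Rs[1], Rs. *)
Definition negsusp (S : Sdata) : Sdata :=
  let C := S_C S in let Rs := S_R S in
  let Cs := dsum (shift C 2) (shift Rs 2) in
  @SData Cs Rs
    (fun (i j : gen C + gen Rs) => match i, j with
       | inl a, inl b => S_d S a b
       | inr a, inl b => S_delta1 S a b
       | inr a, inr b => S_r S a b
       | _, _ => 0 end)
    (fun (i j : gen C + gen Rs) => match i, j with
       | inl a, inl b => S_v S a b
       | inl a, inr b => S_delta2 S a b
       | _, _ => 0 end)
    (fun (i : gen Rs) (j : gen C + gen Rs) => match j with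
       | inl b => mcomp (S_delta1 S) (S_v S) i b
       | inr b => mcomp (S_delta1 S) (S_delta2 S) i b end)
    (fun (i : gen C + gen Rs) (j : gen Rs) => match i with
       | inl _ => 0
       | inr a => (a == j)%:R end)
    (S_r S).

Definition Ominus1 : Sdata :=
  @SData (@GMod unit (fun _ => (-2)%R)) (@GMod unit (fun _ => 0%R))
    (fun _ _ => 0) (fun _ _ => 0) (fun _ _ => 0) (fun _ _ => 1) (fun _ _ => 0).

End Defs.

(* Main.v *)
Require Import Defs.
From mathcomp Require Import all_boot all_order all_algebra.
From Stdlib Require Import Setoid Morphisms FunctionalExtensionality.
From mathcomp Require Import ring zify.
Import GRing.Theory.
Local Open Scope ring_scope.

#[export] Instance bigop_proper (R : Type) (I : Type) (idx : R) (r : seq I) :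
  Proper (pointwise_relation I eq ==> eq) (@bigop R I idx r).
Proof. by move=> F G H; rewrite (functional_extensionality _ _ H). Qed.

Section S.
Variable R : comPzRingType.

Lemma sum_pairE (I J : finType) (F : I * J -> R) :
  \sum_(p : I * J) F p = \sum_(j : J) \sum_(i : I) F (i, j).
Proof.
rewrite exchange_big pair_bigA /=; apply: eq_bigr => -[] //.
Qed.

Lemma sum_unitE (F : unit -> R) : \sum_(i : unit) F i = F tt.
Proof. by rewrite (big_pred1 tt) // => -[]. Qed.

Lemma sumS1 (T : finType) (i : T) (F : T -> R) : \sum_k (i == k)%:R * F k = F i.
Proof. rewrite (bigD1 i) //= eqxx mul1r big1 ?addr0 // => k /negbTE; rewrite eq_sym => ->; by rewrite mul0r. Qed.
Lemma sumS2 (T : finType) (i : T) (G F : T -> R) : \sum_k (i == k)%:R * G k * F k = G i * F i.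
Proof. under eq_bigr do rewrite -mulrA. by rewrite sumS1. Qed.
Lemma sumS3 (T : finType) (i : T) (F : T -> R) : \sum_k F k * (k == i)%:R = F i.
Proof. under eq_bigr do rewrite mulrC eq_sym. by rewrite sumS1. Qed.
Lemma sumS4 (T : finType) (i : T) (G F : T -> R) : \sum_k F k * ((k == i)%:R * G k) = F i * G i.
Proof. under eq_bigr do rewrite mulrCA mulrA eq_sym. by rewrite sumS2 mulrC. Qed.

Lemma absz_odd (k : int) : odd (absz (k + 1)%R) = ~~ odd (absz k).
Proof.
case: k => n. by rewrite -PoszD addn1 /=.
have -> : absz (Negz n + 1)%R = n by lia.
have -> : absz (Negz n) = n.+1 by lia.
by rewrite /= negbK.
Qed.
Lemma sgnzS (k : int) : sgnz R (k + 1) = - sgnz R k.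
Proof. by rewrite /sgnz absz_odd; case: (odd _); rewrite ?opprK. Qed.
Lemma sgnzN (k : int) : sgnz R (- k) = sgnz R k.
Proof. by rewrite /sgnz abszN. Qed.
Lemma sgnz_sq (k : int) : sgnz R k * sgnz R k = 1.
Proof. by rewrite /sgnz; case: (odd _); rewrite ?mulrNN mulr1. Qed.
Lemma sgnzDn (x : int) (n : nat) : sgnz R (x + n%:Z) = sgnz R x * sgnz R n%:Z.
Proof.
elim: n => [|n IH]; first by rewrite addr0 /sgnz /= mulr1.
have -> : x + n.+1%:Z = (x + n%:Z) + 1 by lia.
have -> : n.+1%:Z = n%:Z + 1 by lia.
by rewrite !sgnzS IH mulrN.
Qed.
Lemma sgnzD (x y : int) : sgnz R (x + y) = sgnz R x * sgnz R y.
Proof.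
case: y => n; first exact: sgnzDn.
rewrite NegzE sgnzN.
have {2}-> : x = (x - n.+1%:Z) + n.+1%:Z by lia.
by rewrite sgnzDn -mulrA sgnz_sq mulr1.
Qed.
Lemma sgnzB (x y : int) : sgnz R (x - y) = sgnz R x * sgnz R y.
Proof. by rewrite sgnzD sgnzN. Qed.

Lemma sum_mulc (T : finType) (F G : T -> R) (x : R) : \sum_k F k * (G k * x) = (\sum_k F k * G k) * x.
Proof. rewrite mulr_suml; apply: eq_bigr => k _; by rewrite mulrA. Qed.
Lemma sumNl (T : finType) (F G : T -> R) : \sum_k (- F k) * G k = - \sum_k F k * G k.
Proof. rewrite -sumrN; apply: eq_bigr => k _; by rewrite mulNr. Qed.
Lemma sumNr (T : finType) (F G : T -> R) : \sum_k F k * (- G k) = - \sum_k F k * G k.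
Proof. rewrite -sumrN; apply: eq_bigr => k _; by rewrite mulrN. Qed.

Variable S : Sdata R.
Hypothesis hdeg : has_degree (-1) (@Sdiff _ S).
Hypothesis hsq : meq (mcomp (@Sdiff _ S) (@Sdiff _ S)) (@mzero _ _ _).

Notation C := (gen (S_C S)).
Notation Rs := (gen (S_R S)).
Notation TT := (dtensor (Sdchi S) (Sdchi (Ominus1 R))).
Notation TS := (Sdchi (negsusp S)).
Notation dd := (@S_d _ S).
Notation vv := (@S_v _ S).
Notation d1 := (@S_delta1 _ S).
Notation d2 := (@S_delta2 _ S).
Notation rr := (@S_r _ S).

Definition fmap : gmap R (dc_mod TS) (dc_mod TT) := fun i j =>
 match i, j with
 | (inl (inl c), inl (inl tt)), inl (inl (inl a)) => (c == a)%:R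
 | (inl (inl c), inr tt), inl (inl (inl a)) => vv c a
 | (inl (inr c), inl (inl tt)), inl (inr (inl a)) => (c == a)%:R
 | (inl (inl c), inl (inr tt)), inl (inr (inl a)) => (c == a)%:R * sgnz R (deg a)
 | (inl (inr c), inr tt), inl (inr (inl a)) => vv c a
 | (inr c, inl (inl tt)), inl (inl (inr b)) => (c == b)%:R
 | (inl (inl c), inr tt), inl (inl (inr b)) => d2 c b
 | (inr c, inl (inr tt)), inl (inr (inr b)) => (c == b)%:R * sgnz R (deg b)
 | (inl (inr c), inr tt), inl (inr (inr b)) => d2 c b
 | (inr c, inr tt), inr b => (c == b)%:R
 | _, _ => 0 end.

Lemma sum0l (T : finType) (F : T -> R) : \sum_k 0 * F k = 0.
Proof. by rewrite big1 // => k _; rewrite mul0r. Qed.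
Lemma sum0r (T : finType) (F : T -> R) : \sum_k F k * 0 = 0.
Proof. by rewrite big1 // => k _; rewrite mulr0. Qed.

Lemma eq_inlE (A B : eqType) (x y : A) : (inl x == inl y :> A + B) = (x == y). Proof. by []. Qed.
Lemma eq_inrE (A B : eqType) (x y : B) : (inr x == inr y :> A + B) = (x == y). Proof. by []. Qed.

Definition epsc (i j : gen (Stot S)) : R :=
  match i, j with
  | inl (inl a), inl (inl b) => (a == b)%:R * sgnz R (deg b)
  | inl (inr a), inl (inr b) => (a == b)%:R * sgnz R (deg b)
  | inr a, inr b => (a == b)%:R * sgnz R (deg b)
  | _, _ => 0 end.

Definition DTc : gmap R (dc_mod TT) (dc_mod TT) := fun i j =>
  match i, j with
  | (x, inl (inl tt)), (y, inl (inl tt)) => Sdiff x y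
  | (x, inl (inr tt)), (y, inl (inr tt)) => Sdiff x y
  | (x, inr tt), (y, inr tt) => Sdiff x y
  | (x, inl (inr tt)), (y, inr tt) => epsc x y
  | _, _ => 0 end.

Definition XTc : gmap R (dc_mod TT) (dc_mod TT) := fun i j =>
  match i, j with
  | (x, inl (inl tt)), (y, inl (inl tt)) => Schi x y
  | (x, inl (inr tt)), (y, inl (inr tt)) => Schi x y
  | (x, inr tt), (y, inr tt) => Schi x y
  | (x, inl (inr tt)), (y, inl (inl tt)) => epsc x y
  | _, _ => 0 end.

Definition DSc : gmap R (dc_mod TS) (dc_mod TS) := fun i j =>
  match i, j with
  | inl (inl (inl c)), inl (inl (inl a)) => dd c a
  | inl (inl (inr c)), inl (inl (inl a)) => d1 c a
  | inl (inr (inl c)), inl (inl (inl a)) => vv c a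
  | inr c, inl (inl (inl a)) => mcomp d1 vv c a
  | inl (inl (inr c)), inl (inl (inr b)) => rr c b
  | inl (inr (inl c)), inl (inl (inr b)) => d2 c b
  | inr c, inl (inl (inr b)) => mcomp d1 d2 c b
  | inl (inr (inl c)), inl (inr (inl a)) => - dd c a
  | inl (inr (inr c)), inl (inr (inl a)) => - d1 c a
  | inl (inr (inr c)), inl (inr (inr b)) => - rr c b
  | inl (inr (inr c)), inr b => (c == b)%:R
  | inr c, inr b => rr c b
  | _, _ => 0 end.

Definition XSc : gmap R (dc_mod TS) (dc_mod TS) := fun i j =>
  match i, j with
  | inl (inr (inl c)), inl (inl (inl a)) => (c == a)%:R
  | inl (inr (inr c)), inl (inl (inr b)) => (c == b)%:R
  | _, _ => 0 end.

Lemma funext2 (A B C : Type) (f g : A -> B -> C) : (forall a b, f a b = g a b) -> f = g.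
Proof. move=> H; apply: functional_extensionality => a; apply: functional_extensionality => b; exact: H. Qed.

Lemma DTcE : @dc_d _ TT = DTc.
Proof.
apply: funext2 => -[[[c|c]|c] [[[]|[]]|[]]] [[[a|a]|a] [[[]|[]]|[]]];
  rewrite /= /madd /tmap /mid /eps /= ?(eq_inlE, eq_inrE, mulr1, mulr0, mul0r, mul1r, addr0, add0r, oppr0, opprK) //.
all: try done.
Qed.
Lemma XTcE : @dc_chi _ TT = XTc.
Proof.
apply: funext2 => -[[[c|c]|c] [[[]|[]]|[]]] [[[a|a]|a] [[[]|[]]|[]]];
  rewrite /= /madd /tmap /mid /eps /= ?(eq_inlE, eq_inrE, mulr1, mulr0, mul0r, mul1r, addr0, add0r, oppr0, opprK) //.
all: try done.
Qed.

Lemma DScE : @dc_d _ TS = DSc.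
Proof.
apply: funext2 => -[[[c|c]|[c|c]]|c] [[[a|a]|[a|a]]|a];
  rewrite /= ?(eq_inlE, eq_inrE, mulr1, mulr0, mul0r, mul1r, addr0, add0r, oppr0, opprK) //.
all: try done.
Qed.

Lemma XScE : @dc_chi _ TS = XSc.
Proof.
apply: funext2 => -[[[c|c]|[c|c]]|c] [[[a|a]|[a|a]]|a];
  rewrite /= ?(eq_inlE, eq_inrE, mulr1, mulr0, mul0r, mul1r, addr0, add0r, oppr0, opprK) //.
all: try done.
Qed.

Ltac expand :=
  rewrite /madd /msub /mid /mzero /mcomp /= ?sum_pairE /= ?big_sumType ?sum_unitE /= ?big_sumType /=;
  rewrite ?(xpair_eqE, eq_inlE, eq_inrE) /= ?(andbT, andbF, mulr0n, mulr1n, oppr0, subr0) ; try rewrite /mcomp;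
  rewrite ?(sum0l, sum0r, sumS1, sumS2, sumS3, sumS4, sum_mulc);
  rewrite ?(mulr1, mulr0, mul0r, mul1r, addr0, add0r, oppr0, opprK).

Lemma deg_d c a : dd c a != 0 -> deg c = deg a - 1.
Proof. move=> H; have /= := hdeg (inl (inl c)) (inl (inl a)) H; lia. Qed.
Lemma deg_v c a : vv c a != 0 -> deg c = deg a - 2.
Proof. move=> H; have /= := hdeg (inl (inr c)) (inl (inl a)) H; lia. Qed.
Lemma deg_d1 c a : d1 c a != 0 -> deg c = deg a - 1.
Proof. move=> H; have /= := hdeg (inr c) (inl (inl a)) H; lia. Qed.
Lemma deg_d2 c a : d2 c a != 0 -> deg c = deg a - 2.
Proof. move=> H; have /= := hdeg (inl (inr c)) (inr a) H; lia. Qed.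
Lemma deg_r c a : rr c a != 0 -> deg c = deg a - 1.
Proof. move=> H; have /= := hdeg (inr c) (inr a) H; lia. Qed.

Ltac hexp := rewrite /mcomp /mzero /= !big_sumType /= ?(sum0l, sum0r, sumNl, sumNr) ?(addr0, add0r).
Lemma rel_vd (c a : C) : \sum_i dd c i * vv i a = \sum_i vv c i * dd i a + \sum_i d2 c i * d1 i a.
Proof. have := hsq (inl (inr c)) (inl (inl a)); hexp.
move=> H; apply/eqP; first [rewrite -subr_eq0 -[X in _ == X]H; apply/eqP; ring | rewrite eq_sym -subr_eq0 -[X in _ == X]H; apply/eqP; ring]. Qed.
Lemma rel_dd2 (c : C) (b : Rs) : \sum_i dd c i * d2 i b = \sum_i d2 c i * rr i b.
Proof. have := hsq (inl (inr c)) (inr b); hexp.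
move=> H; apply/eqP; first [rewrite -subr_eq0 -[X in _ == X]H; apply/eqP; ring | rewrite eq_sym -subr_eq0 -[X in _ == X]H; apply/eqP; ring]. Qed.
Lemma rel_d1d (b : Rs) (a : C) : \sum_i d1 b i * dd i a = - \sum_i rr b i * d1 i a.
Proof. have := hsq (inr b) (inl (inl a)); hexp.
move=> H; apply/eqP; first [rewrite -subr_eq0 -[X in _ == X]H; apply/eqP; ring | rewrite eq_sym -subr_eq0 -[X in _ == X]H; apply/eqP; ring]. Qed.
Lemma rel_rr (b b' : Rs) : \sum_i rr b i * rr i b' = 0.
Proof. have := hsq (inr b) (inr b'); hexp.
move=> H; apply/eqP; first [rewrite -subr_eq0 -[X in _ == X]H; apply/eqP; ring | rewrite eq_sym -subr_eq0 -[X in _ == X]H; apply/eqP; ring]. Qed.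
Lemma rel_dd (c a : C) : \sum_i dd c i * dd i a = 0.
Proof. have := hsq (inl (inl c)) (inl (inl a)); hexp.
move=> H; apply/eqP; first [rewrite -subr_eq0 -[X in _ == X]H; apply/eqP; ring | rewrite eq_sym -subr_eq0 -[X in _ == X]H; apply/eqP; ring]. Qed.
Lemma sgnz1 : sgnz R 1 = -1. Proof. by []. Qed.
Lemma sgnz2 : sgnz R 2 = 1. Proof. by []. Qed.

Ltac degcase := match goal with
 | |- context [dd ?x ?y] => case: (eqVneq (dd x y) 0) => [->|/deg_d ->]
 | |- context [vv ?x ?y] => case: (eqVneq (vv x y) 0) => [->|/deg_v ->]
 | |- context [d1 ?x ?y] => case: (eqVneq (d1 x y) 0) => [->|/deg_d1 ->]
 | |- context [d2 ?x ?y] => case: (eqVneq (d2 x y) 0) => [->|/deg_d2 ->]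
 | |- context [rr ?x ?y] => case: (eqVneq (rr x y) 0) => [->|/deg_r ->]
 end.
Lemma sgnz_cases k : sgnz R k = 1 \/ sgnz R k = -1.
Proof. rewrite /sgnz; case: (odd _); by [right|left]. Qed.
Ltac deltacase := match goal with
 | |- context [@eq_op _ ?x ?y] => case: eqP => [->|_]; rewrite ?eqxx /= ?(mulr1n, mulr0n, oppr0, mul0r, mulr0, mul1r, mulr1, addr0, add0r, subr0)
 end.
Ltac signcase := match goal with
 | |- context [sgnz _ (@deg ?g ?x)] => case: (sgnz_cases (@deg g x)) => ->
 end.
Ltac sgnorm := rewrite ?sgnzB ?sgnzD ?sgnzN ?sgnz1 ?sgnz2.

Lemma sum_d1_sgn (b : Rs) (a : C) :
  \sum_i d1 b i * - sgnz R (deg i) * dd i a = (\sum_i d1 b i * dd i a) * sgnz R (deg a).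
Proof.
rewrite mulr_suml; apply: eq_bigr => i _.
case: (eqVneq (dd i a) 0) => [->|/deg_d ->]; first by rewrite !(mulr0, mul0r).
sgnorm; ring.
Qed.

Ltac finish :=
  rewrite ?(sumNl, sumNr);
  rewrite ?sum_d1_sgn;
  rewrite ?(rel_vd, rel_dd2, rel_d1d, rel_rr, rel_dd);
  try solve [ring];
  try solve [sgnorm; ring];
  try solve [degcase; sgnorm; ring];
  try solve [repeat deltacase; try degcase; sgnorm; repeat signcase; ring].

Definition gmap_ : gmap R (dc_mod TT) (dc_mod TS) := fun i j =>
 match i, j with
 | inl (inl (inl c)), (inl (inl a), inl (inl tt)) => (c == a)%:R
 | inl (inr (inl c)), (inl (inr a), inl (inl tt)) => (c == a)%:R
 | inr c, (inl (inr a), inl (inl tt)) => d1 c a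
 | inl (inl (inr c)), (inr b, inl (inl tt)) => (c == b)%:R
 | inr c, (inl (inl a), inl (inr tt)) => d1 c a * - sgnz R (@deg (S_C S) a)
 | inl (inr (inr c)), (inr b, inl (inr tt)) => (c == b)%:R * sgnz R (@deg (S_R S) b)
 | inr c, (inr b, inr tt) => (c == b)%:R
 | _, _ => 0 end.

Definition Kmap : gmap R (dc_mod TT) (dc_mod TT) := fun i j =>
 match i, j with
 | (inl (inl c), inr tt), (inl (inr a), inl (inl tt)) => (c == a)%:R
 | (inl (inl c), inr tt), (inl (inl a), inl (inr tt)) => (c == a)%:R * - sgnz R (@deg (S_C S) a)
 | (inl (inr c), inr tt), (inl (inr a), inl (inr tt)) => (c == a)%:R * sgnz R (@deg (S_C S) a)
 | _, _ => 0 end.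

Ltac caseT := move=> [[[?|?]|?] [[[]|[]]|[]]].
Ltac caseS := move=> [[[?|?]|[?|?]]|?].

Lemma f_chi : meq (mcomp (@dc_chi _ TT) fmap) (mcomp fmap (@dc_chi _ TS)).
Proof. rewrite XTcE XScE. caseT; caseS; expand; finish. Qed.

Lemma g_chain : meq (mcomp (@dc_d _ TS) gmap_) (mcomp gmap_ (@dc_d _ TT)).
Proof. rewrite DTcE DScE. caseS; caseT; expand; finish. Qed.

Lemma g_chi : meq (mcomp (@dc_chi _ TS) gmap_) (mcomp gmap_ (@dc_chi _ TT)).
Proof. rewrite XTcE XScE. caseS; caseT; expand; finish. Qed.

Lemma gf_id : meq (madd (mcomp (@dc_d _ TS) (@mzero _ _ _)) (mcomp (@mzero _ _ _) (@dc_d _ TS)))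
   (msub (mcomp gmap_ fmap) (@mid _ _)).
Proof. rewrite DScE. caseS; caseS; expand; finish. Qed.

Lemma K_chi : meq (madd (mcomp (@dc_chi _ TT) Kmap) (mcomp Kmap (@dc_chi _ TT))) (@mzero _ _ _).
Proof. rewrite XTcE. caseT; caseT; expand; finish. Qed.

Lemma K_htpy : meq (madd (mcomp (@dc_d _ TT) Kmap) (mcomp Kmap (@dc_d _ TT)))
   (msub (mcomp fmap gmap_) (@mid _ _)).
Proof. rewrite DTcE. caseT; caseT; expand; finish. Qed.

Lemma f_chain : meq (mcomp (@dc_d _ TT) fmap) (mcomp fmap (@dc_d _ TS)).
Proof.
rewrite DTcE DScE.
move=> [[[c|c]|c] [[[]|[]]|[]]] [[[a|a]|[a|a]]|a].
all: expand.
all: finish.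
Qed.
Lemma delta_ne (T : eqType) (x y : T) (r : R) : (x == y)%:R * r != 0 -> x = y.
Proof. by case: (x =P y) => // _; rewrite mul0r eqxx. Qed.
Lemma delta_ne1 (T : eqType) (x y : T) : (x == y)%:R != 0 :> R -> x = y.
Proof. by case: (x =P y) => // _; rewrite eqxx. Qed.
Lemma mul_nel (x y : R) : x * y != 0 -> x != 0.
Proof. by apply: contra => /eqP ->; rewrite mul0r. Qed.

Ltac degtac := let H := fresh "H" in intro H;
  first [ by rewrite eqxx in H
        | move/delta_ne: H => ->; simpl; lia
        | move/delta_ne1: H => ->; simpl; lia
        | (try move/mul_nel: H => H);
          first [ move/deg_d: H => -> | move/deg_v: H => -> | move/deg_d1: H => ->
                | move/deg_d2: H => -> | move/deg_r: H => -> ]; simpl; lia ].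

Lemma f_deg : has_degree 0 fmap.
Proof. caseT; caseS; rewrite /=; degtac. Qed.
Lemma g_deg : has_degree 0 gmap_.
Proof. caseS; caseT; rewrite /=; degtac. Qed.
Lemma K_deg : has_degree 1 Kmap.
Proof. caseT; caseT; rewrite /=; degtac. Qed.

End S.

Theorem proposition2p6 (R : comPzRingType) (S : Sdata R) :
  is_Scomplex S ->
  S_htpy_equiv (Sdchi (negsusp S)) (dtensor (Sdchi S) (Sdchi (Ominus1 R))).
Proof.
move=> [hd hs].
exists (@fmap R S), (@gmap_ R S); split.
- split; [exact: f_deg | exact: f_chain | exact: f_chi].
- split; [exact: g_deg | exact: g_chain | exact: g_chi].
- exists (@mzero _ _ _); split.
  + by move=> i j; rewrite eqxx.
  + by move=> i j; rewrite /madd /mcomp /mzero !big1 ?addr0 // => k _; rewrite ?mulr0 ?mul0r.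
  + exact: gf_id.
- exists (@Kmap R S); split; [exact: K_deg | exact: K_chi | exact: K_htpy].
Qed.
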